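(* Let $F:\mathbb{N}\to\mathbb{R}$ be a function such that (a) $F$ is weakly monotonically increasing; (b) $F(q)\to\infty$ as $q\to\infty$; and (c) $q/F(q)\to\infty$ as $q\to\infty$. For each natural number $q$, let $Z_F(q)$ be the number of positive divisors $d$ of $q$ with $d<\sqrt{F(q)}$, minus the number of positive divisors $d$ of $q$ with $\sqrt{F(q)}\le d< F(q)$. Then $$\lim_{B\to\infty}\frac{1}{B}\sum_{q=1}^{B} Z_F(q)=\gamma .$$
   Context: $\gamma$ denotes the Euler–Mascheroni constant, $\gamma=\lim_{n\to\infty}\left(\sum_{k=1}^n \frac1k-\ln n\right)$. $\mathbb{N}=\{1,2,3,\dots\}$. *)

(* Defs.v *)
From Stdlib Require Import Reals List Arith.
From Coquelicot Require Import Coquelicot.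
Import ListNotations.
Open Scope R_scope.

Definition harmonic_minus_log (n : nat) : R :=
  sum_n_m (fun k => / INR k) 1 n - ln (INR n).

Definition euler_gamma : R := real (Lim_seq harmonic_minus_log).

Definition divisors_of (q : nat) : list nat :=
  filter (fun d => Nat.eqb (q mod d) 0) (seq 1 q).

Definition Z_F (F : nat -> R) (q : nat) : R :=
  INR (length (filter (fun d => if Rlt_dec (INR d) (sqrt (F q)) then true else false)
                      (divisors_of q)))
  - INR (length (filter (fun d => if Rle_dec (sqrt (F q)) (INR d) then
                                    (if Rlt_dec (INR d) (F q) then true else false)
                                  else false)
                        (divisors_of q))).

(* Main.v *)
Require Import Defs.
From Stdlib Require Import Reals Lra Lia List ZArith.
From Coquelicot Require Import Coquelicot.
Open Scope R_scope.

Fixpoint sm (f : nat -> R) (n : nat) : R :=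
  match n with O => 0 | S n' => sm f n' + f n end.

Lemma sm_sum (f : nat -> R) n : sum_n_m f 1 n = sm f n.
Proof.
  induction n as [|n IH].
  - rewrite sum_n_m_zero; [reflexivity| lia].
  - destruct n as [|n].
    + rewrite sum_n_n. simpl. ring.
    + rewrite sum_n_Sm by lia. rewrite IH. reflexivity.
Qed.

Lemma sm_S f n : sm f (S n) = sm f n + f (S n).
Proof. reflexivity. Qed.

Lemma sm_ext f g n : (forall k, (1 <= k <= n)%nat -> f k = g k) -> sm f n = sm g n.
Proof.
  induction n as [|n IH]; intros H; simpl; [reflexivity|].
  rewrite IH by (intros; apply H; lia). rewrite (H (S n)) by lia. reflexivity.
Qed.

Lemma sm_plus f g n : sm (fun k => f k + g k) n = sm f n + sm g n.
Proof. induction n; simpl; [ring|rewrite IHn; ring]. Qed.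

Lemma sm_scal c f n : sm (fun k => c * f k) n = c * sm f n.
Proof. induction n; simpl; [ring|rewrite IHn; ring]. Qed.

Lemma sm_opp f n : sm (fun k => - f k) n = - sm f n.
Proof. induction n; simpl; [ring|rewrite IHn; ring]. Qed.

Lemma sm_zero n : sm (fun _ => 0) n = 0.
Proof. induction n; simpl; [ring|rewrite IHn; ring]. Qed.

Lemma sm_swap (h : nat -> nat -> R) m n :
  sm (fun q => sm (h q) n) m = sm (fun d => sm (fun q => h q d) m) n.
Proof.
  induction m as [|m IH]; simpl.
  - symmetry. apply sm_zero.
  - rewrite IH. rewrite <- sm_plus. reflexivity.
Qed.

Lemma sm_le f g n : (forall k, (1 <= k <= n)%nat -> f k <= g k) -> sm f n <= sm g n.
Proof.
  induction n as [|n IH]; intros H; simpl; [lra|].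
  assert (sm f n <= sm g n) by (apply IH; intros; apply H; lia).
  assert (f (S n) <= g (S n)) by (apply H; lia). lra.
Qed.

Lemma sm_abs f n : Rabs (sm f n) <= sm (fun k => Rabs (f k)) n.
Proof.
  induction n; simpl. rewrite Rabs_R0; lra.
  eapply Rle_trans; [apply Rabs_triang|]. lra.
Qed.

Lemma sm_tail f n M : (n <= M)%nat -> (forall k, (n < k <= M)%nat -> f k = 0) -> sm f M = sm f n.
Proof.
  induction M as [|M IH]; intros H1 H2.
  - replace n with 0%nat by lia. reflexivity.
  - destruct (Nat.eq_dec n (S M)) as [->|Hn]; [reflexivity|].
    simpl. rewrite IH by (lia || (intros; apply H2; lia)). rewrite (H2 (S M)) by lia. ring.
Qed.

Lemma ln_le_sub1 y : 0 < y -> ln y <= y - 1.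
Proof.
  intros Hy. destruct (Req_dec y 1) as [->|Hn].
  - rewrite ln_1; lra.
  - assert (H := exp_ineq1 (y - 1) ltac:(lra)).
    rewrite <- (ln_exp (y - 1)). apply ln_le; lra.
Qed.

Definition harm n := sm (fun k => / INR k) n.

Lemma harm_ge_ln n : ln (INR n + 1) <= harm n.
Proof.
  induction n as [|n IH].
  - simpl. replace (0+1) with 1 by ring. rewrite ln_1. unfold harm; simpl; lra.
  - unfold harm in *; rewrite sm_S. rewrite S_INR.
    assert (Hp : 0 < INR n + 1) by (pose proof (pos_INR n); lra).
    replace (INR n + 1 + 1) with ((INR n + 1) * ((INR n + 2)/(INR n + 1))) by (field; lra).
    rewrite ln_mult by (try apply Rdiv_lt_0_compat; lra).
    assert (H := ln_le_sub1 ((INR n + 2)/(INR n + 1)) ltac:(apply Rdiv_lt_0_compat; lra)).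
    replace ((INR n + 2) / (INR n + 1) - 1) with (/ (INR n + 1)) in H by (field; lra).
    lra.
Qed.

Lemma harm_sum n : sum_n_m (fun k => / INR k) 1 n = harm n.
Proof. apply sm_sum. Qed.

Lemma gamma_lim : is_lim_seq harmonic_minus_log euler_gamma.
Proof.
  assert (Hex : ex_finite_lim_seq harmonic_minus_log).
  { cut (ex_finite_lim_seq (fun n => harmonic_minus_log (S n))).
    { intros [l Hl]. exists l. apply is_lim_seq_incr_1. exact Hl. }
    apply ex_finite_lim_seq_decr with 0.
    - intros n. unfold harmonic_minus_log. rewrite !harm_sum. unfold harm. rewrite sm_S.
      rewrite (S_INR (S n)). rewrite (S_INR n).
      set (x := INR n + 1). set (A := sm _ (S n)).
      assert (Hp : 0 < x) by (unfold x; pose proof (pos_INR n); lra).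
      assert (Hl : ln x = ln (x+1) + ln (x/(x+1))).
      { rewrite <- ln_mult by (try apply Rdiv_lt_0_compat; lra). f_equal. field; lra. }
      rewrite Hl.
      assert (H := ln_le_sub1 (x/(x + 1)) ltac:(apply Rdiv_lt_0_compat; lra)).
      replace (x / (x + 1) - 1) with (- / (x + 1)) in H by (field; lra).
      lra.
    - intros n. unfold harmonic_minus_log. rewrite harm_sum.
      pose proof (harm_ge_ln (S n)). rewrite S_INR in *.
      assert (ln (INR n + 1) <= ln (INR n + 1 + 1)) by (apply ln_le; pose proof (pos_INR n); lra).
      lra. }
  unfold euler_gamma. 
  destruct Hex as [l Hl]. rewrite (is_lim_seq_unique _ _ Hl). exact Hl.
Qed.
Definition ind (b : bool) : R := if b then 1 else 0.

Lemma count_filter (p r : nat -> bool) n :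
  INR (length (filter p (filter r (seq 1 n)))) = sm (fun d => if r d then ind (p d) else 0) n.
Proof.
  induction n as [|n IH]; [reflexivity|].
  rewrite seq_S, !filter_app, length_app, plus_INR, IH, sm_S.
  replace (1 + n)%nat with (S n) by lia. f_equal.
  simpl. destruct (r (S n)); simpl; [|reflexivity].
  destruct (p (S n)); simpl; unfold ind; lra.
Qed.

Definition w (F : nat -> R) (q d : nat) : R :=
  (if Rlt_dec (INR d) (sqrt (F q)) then 1 else 0)
  - (if Rle_dec (sqrt (F q)) (INR d) then
       (if Rlt_dec (INR d) (F q) then 1 else 0) else 0).

Lemma Z_F_sm F q : Z_F F q = sm (fun d => if Nat.eqb (q mod d) 0 then w F q d else 0) q.
Proof.
  unfold Z_F, divisors_of. rewrite !count_filter.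
  unfold Rminus. rewrite <- sm_opp, <- sm_plus. apply sm_ext. intros k _.
  destruct (Nat.eqb (q mod k) 0); [|ring].
  unfold w, ind. destruct (Rlt_dec _ _); destruct (Rle_dec _ _); try destruct (Rlt_dec _ _); lra.
Qed.
Definition a1 (F : nat -> R) q d : R := if Rlt_dec (INR d) (sqrt (F q)) then 1 else 0.
Definition a2 (F : nat -> R) q d : R := if Rlt_dec (INR d) (F q) then 1 else 0.

Lemma lt_sqrt_lt x y : 1 <= x -> x < sqrt y -> x < y.
Proof.
  intros H1 H2. destruct (Rle_lt_dec y 0) as [Hy|Hy].
  - rewrite sqrt_neg_0 in H2 by lra. lra.
  - pose proof (sqrt_sqrt y ltac:(lra)). nra.
Qed.

Lemma w_eq F q d : (1 <= d)%nat -> w F q d = 2 * a1 F q d - a2 F q d.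
Proof.
  intros Hd. assert (H1 : 1 <= INR d) by (apply (le_INR 1); lia).
  unfold w, a1, a2.
  destruct (Rlt_dec (INR d) (sqrt (F q))) as [H|H].
  - assert (INR d < F q) by (apply lt_sqrt_lt with (1:=H1); exact H).
    destruct (Rle_dec _ _); [lra|]. destruct (Rlt_dec _ _); lra.
  - destruct (Rle_dec _ _); [|lra]. destruct (Rlt_dec _ _); lra.
Qed.

Definition cc (d q : nat) : R := ind (Nat.eqb (q mod d) 0) - / INR d.

Lemma P_eq d n : (1 <= d)%nat -> sm (cc d) n = - INR (n mod d) / INR d.
Proof.
  intros Hd. assert (Hd' : 0 < INR d) by (apply lt_0_INR; lia).
  induction n as [|n IH].
  - simpl. rewrite Nat.Div0.mod_0_l. simpl. field. lra.
  - rewrite sm_S, IH. unfold cc.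
    pose proof (Nat.div_mod n d ltac:(lia)) as Hdm.
    pose proof (Nat.mod_upper_bound n d ltac:(lia)) as Hub.
    destruct (Nat.eq_dec (S (n mod d)) d) as [He|He].
    + assert (Hm : S n mod d = 0%nat).
      { symmetry. apply Nat.mod_unique with (q := S (n / d)%nat); lia. }
      rewrite Hm. simpl Nat.eqb. unfold ind.
      assert (Hdr : INR d = INR (n mod d) + 1) by (rewrite <- S_INR; f_equal; lia).
      pose proof (pos_INR (n mod d)). rewrite Hdr. simpl INR. field. lra.
    + assert (Hm : S n mod d = S (n mod d)).
      { symmetry. apply Nat.mod_unique with (q := (n / d)%nat); lia. }
      rewrite Hm. simpl Nat.eqb. unfold ind. rewrite S_INR. field. lra.
Qed.

Lemma P_bounds d n : (1 <= d)%nat -> -1 < sm (cc d) n <= 0.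
Proof.
  intros Hd. rewrite P_eq by exact Hd.
  assert (Hd' : 0 < INR d) by (apply lt_0_INR; lia).
  pose proof (Nat.mod_upper_bound n d ltac:(lia)) as Hub.
  apply lt_INR in Hub. pose proof (pos_INR (n mod d)).
  split.
  - apply Rmult_lt_reg_r with (INR d); [lra|]. unfold Rdiv. rewrite Rmult_assoc, Rinv_l by lra. lra.
  - unfold Rdiv. assert (0 <= INR (n mod d) * / INR d) by (apply Rmult_le_pos; [lra| apply Rlt_le, Rinv_0_lt_compat; lra]). lra.
Qed.

Lemma mono_ind_bound d (u : nat -> R) B :
  (1 <= d)%nat ->
  (forall q, u q = 0 \/ u q = 1) ->
  (forall q, (1 <= q)%nat -> u q = 1 -> u (S q) = 1) ->
  Rabs (sm (fun q => cc d q * u q) B) <= 1.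
Proof.
  intros Hd H01 Hmon.
  assert (Inv : forall B, (u B = 0 -> sm (fun q => cc d q * u q) B = 0) /\
                  exists k, sm (fun q => cc d q * u q) B = sm (cc d) B - sm (cc d) k).
  { induction B0 as [|B0 [IH1 [k IH2]]].
    - split; [reflexivity|]. exists 0%nat. simpl. ring.
    - destruct (H01 (S B0)) as [Hu|Hu].
      + assert (Hz : sm (fun q => cc d q * u q) (S B0) = 0).
        { rewrite sm_S, Hu. destruct B0 as [|B1].
          - simpl. ring.
          - destruct (H01 (S B1)) as [Hu'|Hu'].
            + rewrite IH1 by exact Hu'. ring.
            + rewrite (Hmon (S B1)) in Hu by (lia || exact Hu'). lra. }
        split; [intros; exact Hz|]. exists (S B0). rewrite Hz. ring.
      + split; [intros; lra|]. exists k. rewrite !sm_S, IH2, Hu. ring. }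
  destruct (Inv B) as [_ [k Hk]]. rewrite Hk.
  pose proof (P_bounds d B Hd). pose proof (P_bounds d k Hd).
  apply Rabs_le. lra.
Qed.
Section Main.
Variable F : nat -> R.
Hypothesis Hmono : forall m n : nat, (1 <= m)%nat -> (m <= n)%nat -> F m <= F n.

Lemma a1_01 d q : a1 F q d = 0 \/ a1 F q d = 1.
Proof. unfold a1; destruct (Rlt_dec _ _); auto. Qed.
Lemma a2_01 d q : a2 F q d = 0 \/ a2 F q d = 1.
Proof. unfold a2; destruct (Rlt_dec _ _); auto. Qed.

Lemma a1_mon d q : (1 <= q)%nat -> a1 F q d = 1 -> a1 F (S q) d = 1.
Proof.
  unfold a1; intros Hq. destruct (Rlt_dec _ _) as [H|H]; [|lra]. intros _.
  destruct (Rlt_dec _ _) as [H'|H']; [reflexivity|].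
  exfalso. apply H'. eapply Rlt_le_trans; [exact H|]. apply sqrt_le_1_alt, Hmono; lia.
Qed.
Lemma a2_mon d q : (1 <= q)%nat -> a2 F q d = 1 -> a2 F (S q) d = 1.
Proof.
  unfold a2; intros Hq. destruct (Rlt_dec _ _) as [H|H]; [|lra]. intros _.
  destruct (Rlt_dec _ _) as [H'|H']; [reflexivity|].
  exfalso. apply H'. eapply Rlt_le_trans; [exact H|]. apply Hmono; lia.
Qed.

Lemma w_zero q d : (1 <= d)%nat -> F q <= INR d -> w F q d = 0.
Proof.
  intros Hd Hq. rewrite w_eq by exact Hd. unfold a1, a2.
  assert (H1 : 1 <= INR d) by (apply (le_INR 1); lia).
  destruct (Rlt_dec (INR d) (sqrt (F q))) as [H|H].
  - pose proof (lt_sqrt_lt _ _ H1 H). lra.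
  - destruct (Rlt_dec _ _); lra.
Qed.

Definition Ed d B := sm (fun q => if Nat.eqb (q mod d) 0 then w F q d else 0) B
                     - / INR d * sm (fun q => w F q d) B.

Lemma Ed_eq d B : Ed d B = sm (fun q => cc d q * w F q d) B.
Proof.
  unfold Ed. rewrite <- sm_scal. unfold Rminus. rewrite <- sm_opp, <- sm_plus.
  apply sm_ext. intros k _. unfold cc, ind. destruct (Nat.eqb _ _); ring.
Qed.

Lemma Ed_bound d B : (1 <= d)%nat ->
  Rabs (Ed d B) <= (if Rlt_dec (INR d) (F B) then 3 else 0).
Proof.
  intros Hd. rewrite Ed_eq.
  destruct (Rlt_dec (INR d) (F B)) as [H|H].
  - rewrite (sm_ext _ (fun q => 2 * (cc d q * a1 F q d) + - (cc d q * a2 F q d)))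
      by (intros; rewrite w_eq by exact Hd; ring).
    rewrite sm_plus, sm_scal, sm_opp.
    pose proof (mono_ind_bound d (fun q => a1 F q d) B Hd (a1_01 d) (a1_mon d)).
    pose proof (mono_ind_bound d (fun q => a2 F q d) B Hd (a2_01 d) (a2_mon d)).
    eapply Rle_trans; [apply Rabs_triang|]. rewrite Rabs_mult, Rabs_Ropp, Rabs_pos_eq by lra.
    lra.
  - rewrite (sm_ext _ (fun _ => 0)). rewrite sm_zero, Rabs_R0; lra.
    intros k Hk. rewrite w_zero; [ring|exact Hd|].
    pose proof (Hmono k B ltac:(lia) ltac:(lia)). lra.
Qed.

Lemma count_lt x B : 0 <= x -> sm (fun d => if Rlt_dec (INR d) x then 3 else 0) B <= 3 * x.
Proof.
  intros Hx.
  assert (G : forall B, sm (fun d => if Rlt_dec (INR d) x then 3 else 0) B <= 3 * INR B).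
  { induction B0; simpl sm. simpl; lra. rewrite S_INR.
    destruct (Rlt_dec _ _); lra. }
  induction B as [|B IH]; [simpl; lra|].
  rewrite sm_S. destruct (Rlt_dec _ _) as [H|H].
  - pose proof (G B). rewrite S_INR in H. lra.
  - lra.
Qed.

End Main.
Lemma floor_ex x : 0 < x -> exists n, INR n < x <= INR n + 1.
Proof.
  intros Hx.
  assert (G : forall m, x <= INR m -> exists n, INR n < x <= INR n + 1).
  { induction m as [|m IH]; intros H.
    - simpl in H; lra.
    - destruct (Rle_lt_dec x (INR m)) as [H'|H'].
      + apply IH, H'.
      + exists m. rewrite S_INR in H. lra. }
  destruct (archimed x) as [H1 _].
  apply (G (Z.to_nat (up x))).
  rewrite INR_IZR_INZ, Z2Nat.id; [lra|].
  apply le_IZR. lra.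
Qed.

Lemma harm_cut x n M : INR n < x <= INR n + 1 -> (n <= M)%nat ->
  sm (fun d => (if Rlt_dec (INR d) x then 1 else 0) / INR d) M = harm n.
Proof.
  intros Hx HM. rewrite (sm_tail _ n M HM).
  - apply sm_ext. intros k Hk. destruct (Rlt_dec _ _) as [H|H]; [unfold Rdiv; ring|].
    exfalso. apply H. pose proof (le_INR _ _ (proj2 Hk)). lra.
  - intros k Hk. destruct (Rlt_dec _ _) as [H|H]; [|unfold Rdiv; ring].
    exfalso. assert (Hk' : (S n <= k)%nat) by lia. apply le_INR in Hk'. rewrite S_INR in Hk'. lra.
Qed.

Lemma sum_f_sm f n : sum_f_R0 (fun k => f (S k)) n = sm f (S n).
Proof. induction n; simpl sum_f_R0; [simpl; ring|]. rewrite IHn. reflexivity. Qed.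

Lemma cesaro_sm f (l : R) : is_lim_seq f l -> is_lim_seq (fun B => / INR B * sm f B) l.
Proof.
  intros H. apply is_lim_seq_incr_1 in H. apply is_lim_seq_Reals in H.
  apply Cesaro_1 in H. apply is_lim_seq_Reals in H.
  apply is_lim_seq_ext_loc with (2 := H). exists 1%nat. intros n Hn.
  destruct n as [|n]; [lia|]. simpl pred. rewrite sum_f_sm. unfold Rdiv. ring.
Qed.
Lemma Hq_lim (F : nat -> R) (B1 : nat)
  (Hinf : is_lim_seq F p_infty)
  (HB1 : forall q, (B1 <= q)%nat -> 0 < F q < INR q) :
  is_lim_seq (fun q => sm (fun d => w F q d / INR d) (max q B1)) euler_gamma.
Proof.
  apply is_lim_seq_spec. intros eps.
  assert (He4 : 0 < eps / 4) by (destruct eps; simpl; lra).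
  pose proof gamma_lim as Hg. apply is_lim_seq_spec in Hg.
  destruct (Hg (mkposreal _ He4)) as [N0 HN0]. simpl in HN0.
  destruct (floor_ex (8 / eps + 1)) as [N' HN'].
  { assert (0 < 8 / eps) by (apply Rdiv_lt_0_compat; destruct eps; simpl; lra). lra. }
  set (K := Nat.max (Nat.max N0 N') 1).
  apply is_lim_seq_spec in Hinf. destruct (Hinf ((INR K + 1) ^ 2)) as [N2 HN2].
  exists (Nat.max N2 B1). intros q Hq.
  pose proof (HN2 q ltac:(lia)) as HFq. destruct (HB1 q ltac:(lia)) as [HF0 HFq'].
  rewrite Nat.max_l by lia.
  assert (HK0 : 0 <= INR K) by apply pos_INR.
  assert (HK1 : 1 <= INR K) by (apply (le_INR 1); unfold K; lia).
  assert (HF1 : 1 < F q) by nra.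
  set (x := F q) in *.
  assert (Hsx : sqrt x * sqrt x = x) by (apply sqrt_sqrt; lra).
  assert (Hs1 : 1 < sqrt x) by (rewrite <- sqrt_1; apply sqrt_lt_1_alt; lra).
  assert (HsK : INR K + 1 < sqrt x).
  { rewrite <- (sqrt_pow2 (INR K + 1)) by lra. apply sqrt_lt_1_alt. split; [nra|lra]. }
  destruct (floor_ex (sqrt x)) as [na Hna]; [lra|].
  destruct (floor_ex x) as [nb Hnb]; [lra|].
  assert (Hnaq : (na <= q)%nat) by (apply Nat.lt_le_incl, INR_lt; nra).
  assert (Hnbq : (nb <= q)%nat) by (apply Nat.lt_le_incl, INR_lt; lra).
  rewrite (sm_ext _ (fun d => 2 * ((if Rlt_dec (INR d) (sqrt x) then 1 else 0) / INR d)
                              + - ((if Rlt_dec (INR d) x then 1 else 0) / INR d))).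
  2:{ intros k Hk. rewrite w_eq by lia. unfold a1, a2. fold x. unfold Rdiv. ring. }
  rewrite sm_plus, sm_scal, sm_opp.
  rewrite (harm_cut (sqrt x) na q Hna Hnaq), (harm_cut x nb q Hnb Hnbq).
  assert (HnaK : (K < na)%nat) by (apply INR_lt; lra).
  assert (HnbK : (K < nb)%nat) by (apply INR_lt; nra).
  pose proof (HN0 na ltac:(unfold K in *; lia)) as Ha.
  pose proof (HN0 nb ltac:(unfold K in *; lia)) as Hb.
  unfold harmonic_minus_log in Ha, Hb. rewrite harm_sum in Ha, Hb.
  apply Rabs_def2 in Ha. apply Rabs_def2 in Hb.
  set (A := INR na) in *. set (Bn := INR nb) in *.
  assert (HA : INR K < A) by (apply lt_INR; lia).
  assert (HAN' : INR N' <= A) by (apply le_INR; unfold K in *; lia).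
  assert (HB : INR K < Bn) by (apply lt_INR; lia).
  assert (Hnat : (na * na <= nb)%nat).
  { assert (INR (na * na) < INR (nb + 1)).
    { rewrite mult_INR, plus_INR. simpl (INR 1). fold A Bn.
      pose proof (pos_INR na). nra. }
    apply INR_lt in H. lia. }
  apply le_INR in Hnat. rewrite mult_INR in Hnat. fold A Bn in Hnat.
  assert (HBA : Bn <= (A + 1) * (A + 1)) by nra.
  assert (L1 : ln (A * A) <= ln Bn) by (apply ln_le; nra).
  assert (L2 : ln Bn <= ln ((A + 1) * (A + 1))) by (apply ln_le; nra).
  rewrite ln_mult in L1, L2 by lra.
  assert (L3 : ln (A + 1) = ln A + ln ((A + 1) / A)).
  { rewrite <- ln_mult by (try apply Rdiv_lt_0_compat; lra). f_equal. field. lra. }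
  pose proof (ln_le_sub1 ((A + 1) / A) ltac:(apply Rdiv_lt_0_compat; lra)) as L4.
  replace ((A + 1) / A - 1) with (/ A) in L4 by (field; lra).
  assert (L5 : / A <= eps / 8).
  { destruct eps as [e He]; simpl in *.
    assert (8 / e <= A) by lra.
    apply Rmult_le_reg_r with A; [lra|]. rewrite Rinv_l by lra.
    apply Rmult_le_reg_l with (8 / e); [apply Rdiv_lt_0_compat; lra|].
    replace (8 / e * (e / 8 * A)) with A by (field; lra). lra. }
  apply Rabs_def1; lra.
Qed.
Theorem theorem1 (F : nat -> R)
  (Hmono : forall m n : nat, (1 <= m)%nat -> (m <= n)%nat -> F m <= F n)
  (Hinf : is_lim_seq F p_infty)
  (Hratio : is_lim_seq (fun q => INR q / F q) p_infty) :
  is_lim_seq (fun B => / INR B * sum_n_m (fun q => Z_F F q) 1 B) euler_gamma.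
Proof.
  pose proof Hinf as Hinf'. pose proof Hratio as Hratio'.
  apply is_lim_seq_spec in Hinf'. apply is_lim_seq_spec in Hratio'.
  destruct (Hinf' 0) as [Na HNa]. destruct (Hratio' 1) as [Nb HNb].
  set (B1 := Nat.max (Nat.max Na Nb) 1).
  assert (HB1 : forall q, (B1 <= q)%nat -> 0 < F q < INR q).
  { intros q Hq. pose proof (HNa q ltac:(unfold B1 in *; lia)).
    pose proof (HNb q ltac:(unfold B1 in *; lia)). split; [lra|].
    apply Rmult_lt_compat_r with (r := F q) in H0; [|lra].
    unfold Rdiv in H0. rewrite Rmult_assoc, Rinv_l in H0 by lra. lra. }
  set (Hq := fun q => sm (fun d => w F q d / INR d) (Nat.max q B1)).
  assert (Hid : forall B, (B1 <= B)%nat ->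
    / INR B * sum_n_m (fun q => Z_F F q) 1 B
    = / INR B * sm Hq B + / INR B * sm (fun d => Ed F d B) B).
  { intros B HB. rewrite <- Rmult_plus_distr_l. f_equal.
    rewrite sm_sum.
    rewrite (sm_ext _ (fun q => sm (fun d => if Nat.eqb (q mod d) 0 then w F q d else 0) B)).
    2:{ intros q Hq1. rewrite Z_F_sm. symmetry. apply sm_tail; [lia|].
        intros k Hk. rewrite Nat.mod_small by lia.
        destruct q; [lia|]. reflexivity. }
    rewrite sm_swap.
    rewrite (sm_ext _ (fun d => / INR d * sm (fun q => w F q d) B + Ed F d B)).
    2:{ intros d _. unfold Ed. ring. }
    rewrite sm_plus. f_equal.
    rewrite (sm_ext _ (fun d => sm (fun q => w F q d / INR d) B)).
    2:{ intros d _. rewrite <- sm_scal. apply sm_ext. intros; unfold Rdiv; ring. }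
    rewrite <- sm_swap. apply sm_ext. intros q Hq1. unfold Hq.
    apply sm_tail; [lia|]. intros d Hd.
    rewrite w_zero; [unfold Rdiv; ring|lia|].
    destruct (le_lt_dec B1 q) as [Hq2|Hq2].
    - destruct (HB1 q Hq2). assert (INR q <= INR d) by (apply le_INR; lia). lra.
    - pose proof (Hmono q B1 ltac:(lia) ltac:(lia)). destruct (HB1 B1 (le_n _)).
      assert (INR B1 <= INR d) by (apply le_INR; lia). lra. }
  apply is_lim_seq_ext_loc with
    (u := fun B => / INR B * sm Hq B + / INR B * sm (fun d => Ed F d B) B).
  { exists B1. intros B HB. symmetry. apply Hid, HB. }
  replace euler_gamma with (euler_gamma + 0) by ring.
  apply is_lim_seq_plus'.
  - apply cesaro_sm. apply Hq_lim; assumption.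
  - apply is_lim_seq_spec. intros eps.
    assert (He : 0 < eps) by (destruct eps; simpl; lra).
    destruct (Hratio' (3 / eps)) as [N3 HN3].
    exists (Nat.max (Nat.max N3 Na) 1). intros B HB.
    pose proof (HN3 B ltac:(lia)) as H3. pose proof (HNa B ltac:(lia)) as HF.
    assert (HBp : 0 < INR B) by (apply lt_0_INR; lia).
    assert (Hs : Rabs (sm (fun d => Ed F d B) B) <= 3 * F B).
    { eapply Rle_trans; [apply sm_abs|].
      eapply Rle_trans; [|apply count_lt; lra].
      apply sm_le. intros d Hd. apply Ed_bound; [exact Hmono|lia]. }
    assert (Hk : 3 * F B < eps * INR B).
    { set (r := INR B / F B) in *.
      assert (INR B = r * F B) by (unfold r; field; lra).
      assert (E3 : eps * (3 / eps) = 3) by (field; lra).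
      assert (E4 : eps * r > 3) by (rewrite <- E3; apply Rmult_lt_compat_l; lra).
      rewrite H. nra. }
    rewrite Rminus_0_r, Rabs_mult, (Rabs_pos_eq (/ INR B)) by (apply Rlt_le, Rinv_0_lt_compat; lra).
    apply Rle_lt_trans with (/ INR B * (3 * F B)).
    + apply Rmult_le_compat_l; [apply Rlt_le, Rinv_0_lt_compat; lra| exact Hs].
    + apply Rmult_lt_reg_l with (INR B); [lra|].
      rewrite <- Rmult_assoc, Rinv_r, Rmult_1_l by lra. lra.
Qed.
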